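(* Let $S$ be a set with operations $+,\cdot$ and relation $\le$ satisfying all axioms of a solid except possibly the distributivity axiom (AM4). Then the following are equivalent: (a) for all $x,y,z\in S$, $xy+xz=x(y+z)$ holds if and only if $e(x)(y+z)=e(x)y+e(x)z$ or $R(x)\le R(y)+R(z)$; (b) for all $x,y,z\in S$, $xy+xz=x(y+z)+e(x)y+e(x)z$.
   Context: A solid is a set $S$ with two binary operations $+$ and $\cdot$ (written $xy$) and a binary relation $\le$ satisfying the following axioms (all variables range over $S$). (A1) $+$ is associative and commutative. (A2) For each $x$ there is $e$ with $x+e=x$ such that $e+f=e$ for every $f$ with $x+f=x$; this $e$ is unique and is denoted $e(x)$ (the magnitude of $x$). An element $x$ with $x=e(x)$ is called a magnitude. (A3) For each $x$ there is $s$ with $x+s=e(x)$ and $e(s)=e(x)$; it is unique and denoted $-x$; write $x-y$ for $x+(-y)$. (A4) $e(x+y)=e(x)$ or $e(x+y)=e(y)$. (M1) $\cdot$ is associative and commutative. (M2) For each $x\neq e(x)$ there is $u$ with $xu=x$ such that $uv=u$ for every $v$ with $xv=x$; it is unique and denoted $u(x)$. (M3) For each $x\ne e(x)$ there is $d$ with $xd=u(x)$ and $u(d)=u(x)$; it is unique and denoted $x^{-1}$; write $y/x$ for $yx^{-1}$. (M4) If $x\neq e(x)$ and $y\ne e(y)$ then $u(xy)=u(x)$ or $u(xy)=u(y)$. (O1) $\le$ is a total order (reflexive, antisymmetric, transitive, total); $x<y$ means $x\le y$ and $x\ne y$. (O2) $x\le y\Rightarrow x+z\le y+z$. (O3) $y+e(x)=e(x)\Rightarrow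 (y\le e(x)$ and $-y\le e(x))$. (O4) $(e(x)<x$ and $y\le z)\Rightarrow xy\le xz$. (O5) $e(y)\le y\le z\Rightarrow e(x)y\le e(x)z$. (AM1) For all $x,y$ there is $z$ with $e(x)y=e(z)$. (AM2) $e(xy)=e(x)y+e(y)x$. (AM3) If $x\ne e(x)$ then $e(u(x))=e(x)/x$. (AM4) (distributivity axiom) $xy+xz=x(y+z)+e(x)y+e(x)z$. (AM5) $-(xy)=(-x)y$. (E1) There is $m$ with $m+x=x$ for all $x$; it is unique, called zero and denoted $0$. (E2) There is $u$ with $ux=x$ for all $x$; it is unique, called one and denoted $1$. (E3) There is $M$ with $e(x)+M=M$ for all $x$. (E4) There is $x$ with $e(x)\ne 0$ and $e(x)\ne M$. (E5) For every $x$ there is $a$ with $x=a+e(x)$ and $e(a)=0$. (E6) If $x,y$ are magnitudes with $x<y$, there is $z$ with $z\ne e(z)$ and $x<z<y$. Further notation: $S^*=\{x\in S: x\ne e(x)\}$ (zeroless elements). $x$ is positive if $e(x)\le x$ and negative if $x<e(x)$; $|x|=x$ if $x$ is positive and $|x|=-x$ if $x$ is negative. $x$ is precise if $e(x)=0$. The relative uncertainty $R(x)$ is $e(u(x))$ if $x\ne e(x)$, and $M$ (from (E3)) if $x=e(x)$. *)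

(* Defs.v *)
From Stdlib Require Import Classical ClassicalEpsilon.

Set Implicit Arguments.

Section SolidAxioms.
Variable T : Type.
Variables (add mul : T -> T -> T) (le : T -> T -> Prop).
(* e = magnitude, opp = additive inverse, u = multiplicative unity of a
   zeroless element, inv = multiplicative inverse of a zeroless element,
   zero = 0, one = 1, bigM = the element M of (E3). The functions u and inv
   are total but only constrained on zeroless elements. *)
Variables (e opp u inv : T -> T) (zero one bigM : T).

Definition lt (x y : T) : Prop := le x y /\ x <> y.

Record solid_without_AM4 : Prop := {
  A1_assoc : forall x y z, add x (add y z) = add (add x y) z;
  A1_comm  : forall x y, add x y = add y x;
  (* A2 (uniqueness of e(x) follows from the minimality clause) *)
  A2_neutral : forall x, add x (e x) = x;
  A2_min : forall x f, add x f = x -> add (e x) f = e x;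
  A3_inv : forall x, add x (opp x) = e x /\ e (opp x) = e x;
  A3_uniq : forall x s, add x s = e x -> e s = e x -> s = opp x;
  A4 : forall x y, e (add x y) = e x \/ e (add x y) = e y;
  M1_assoc : forall x y z, mul x (mul y z) = mul (mul x y) z;
  M1_comm  : forall x y, mul x y = mul y x;
  (* M2 (uniqueness of u(x) follows from the minimality clause) *)
  M2_neutral : forall x, x <> e x -> mul x (u x) = x;
  M2_min : forall x v, x <> e x -> mul x v = x -> mul (u x) v = u x;
  (* M3 : u(d) is only meaningful for zeroless d *)
  M3_inv : forall x, x <> e x ->
      inv x <> e (inv x) /\ mul x (inv x) = u x /\ u (inv x) = u x;
  M3_uniq : forall x d, x <> e x -> d <> e d ->
      mul x d = u x -> u d = u x -> d = inv x;
  (* M4 : u(xy) is only meaningful for zeroless xy *)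
  M4 : forall x y, x <> e x -> y <> e y ->
      mul x y <> e (mul x y) /\
      (u (mul x y) = u x \/ u (mul x y) = u y);
  O1_refl : forall x, le x x;
  O1_antisym : forall x y, le x y -> le y x -> x = y;
  O1_trans : forall x y z, le x y -> le y z -> le x z;
  O1_total : forall x y, le x y \/ le y x;
  O2 : forall x y z, le x y -> le (add x z) (add y z);
  O3 : forall x y, add y (e x) = e x -> le y (e x) /\ le (opp y) (e x);
  O4 : forall x y z, lt (e x) x -> le y z -> le (mul x y) (mul x z);
  O5 : forall x y z, le (e y) y -> le y z -> le (mul (e x) y) (mul (e x) z);
  AM1 : forall x y, exists z, mul (e x) y = e z;
  AM2 : forall x y, e (mul x y) = add (mul (e x) y) (mul (e y) x);
  AM3 : forall x, x <> e x -> e (u x) = mul (e x) (inv x);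
  AM5 : forall x y, opp (mul x y) = mul (opp x) y;
  E1 : forall x, add zero x = x;
  E2 : forall x, mul one x = x;
  E3 : forall x, add (e x) bigM = bigM;
  E4 : exists x, e x <> zero /\ e x <> bigM;
  E5 : forall x, exists a, x = add a (e x) /\ e a = zero;
  E6 : forall x y, x = e x -> y = e y -> lt x y ->
      exists z, z <> e z /\ lt x z /\ lt z y
}.

Definition relunc (x : T) : T :=
  if excluded_middle_informative (x = e x) then bigM else e (u x).

End SolidAxioms.

(* Main.v *)
Require Import Defs.
From Stdlib Require Import Classical ClassicalEpsilon.

Section Solid.
Variable T : Type.
Variables (add mul : T -> T -> T) (le : T -> T -> Prop).
Variables (e opp u inv : T -> T) (zero one bigM : T).
Hypothesis H : solid_without_AM4 add mul le e opp u inv zero one bigM.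

Local Notation "x ⊕ y" := (add x y) (at level 50, left associativity).
Local Notation "x ⊗ y" := (mul x y) (at level 40, left associativity).
Local Notation "x ≼ y" := (le x y) (at level 70).
Local Notation R := (relunc e u bigM).
Definition mag (p : T) := e p = p.

Lemma aA x y z : x ⊕ (y ⊕ z) = x ⊕ y ⊕ z. Proof. apply (A1_assoc H). Qed.
Lemma aC x y : x ⊕ y = y ⊕ x. Proof. apply (A1_comm H). Qed.
Lemma mA x y z : x ⊗ (y ⊗ z) = x ⊗ y ⊗ z. Proof. apply (M1_assoc H). Qed.
Lemma mC x y : x ⊗ y = y ⊗ x. Proof. apply (M1_comm H). Qed.
Lemma lrefl x : x ≼ x. Proof. apply (O1_refl H). Qed.
Lemma lanti x y : x ≼ y -> y ≼ x -> x = y. Proof. apply (O1_antisym H). Qed.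
Lemma ltr x y z : x ≼ y -> y ≼ z -> x ≼ z. Proof. apply (O1_trans H). Qed.
Lemma ltot x y : x ≼ y \/ y ≼ x. Proof. apply (O1_total H). Qed.
Lemma O2l x y z : x ≼ y -> z ⊕ x ≼ z ⊕ y.
Proof. intro h. rewrite (aC z x), (aC z y). apply (O2 H). exact h. Qed.
Lemma O2r x y z : x ≼ y -> x ⊕ z ≼ y ⊕ z. Proof. apply (O2 H). Qed.

Lemma aswap x y z : x ⊕ (y ⊕ z) = y ⊕ (x ⊕ z).
Proof. rewrite aA, (aC x y), <- aA. reflexivity. Qed.
Lemma a4 a b c d : (a ⊕ b) ⊕ (c ⊕ d) = (a ⊕ c) ⊕ (b ⊕ d).
Proof. rewrite <- !aA. f_equal. apply aswap. Qed.
Lemma mswap x y z : x ⊗ (y ⊗ z) = y ⊗ (x ⊗ z).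
Proof. rewrite mA, (mC x y), <- mA. reflexivity. Qed.
Lemma m4 a b c d : (a ⊗ b) ⊗ (c ⊗ d) = (a ⊗ c) ⊗ (b ⊗ d).
Proof. rewrite <- !mA. f_equal. apply mswap. Qed.

Lemma aE x : x ⊕ e x = x. Proof. apply (A2_neutral H). Qed.
Lemma eidem x : e x ⊕ e x = e x. Proof. apply (A2_min H). apply aE. Qed.
Lemma ee x : e (e x) = e x.
Proof.
  pose proof (aE (e x)) as h1.
  pose proof (A2_min H _ (eidem x)) as h2.
  rewrite aC in h2. congruence.
Qed.
Lemma mag_e x : mag (e x). Proof. apply ee. Qed.
Lemma idem_mag y : y ⊕ y = y -> mag y.
Proof.
  intro h. pose proof (A2_min H _ h) as h2. pose proof (aE y) as h1.
  unfold mag. rewrite aC in h2. congruence.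
Qed.
Lemma mag_idem p : mag p -> p ⊕ p = p.
Proof. intro h. unfold mag in h. rewrite <- h. apply eidem. Qed.

Lemma e_add x y : e (x ⊕ y) = e x ⊕ e y.
Proof.
  assert (h : (x ⊕ y) ⊕ (e x ⊕ e y) = x ⊕ y).
  { rewrite a4, !aE. reflexivity. }
  pose proof (A2_min H _ h) as h2.
  destruct (A4 H x y) as [h3|h3]; rewrite h3 in h2 |- *.
  - rewrite aA, eidem in h2. congruence.
  - rewrite aswap, eidem in h2. congruence.
Qed.

Lemma absorb_iff x f : x ⊕ f = x <-> e x ⊕ f = e x.
Proof.
  split; intro h.
  - apply (A2_min H). exact h.
  - rewrite <- (aE x) at 1. rewrite <- aA, h. apply aE.
Qed.

Lemma mag_add p q : mag p -> mag q -> mag (p ⊕ q).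
Proof. unfold mag. intros hp hq. rewrite e_add, hp, hq. reflexivity. Qed.

Lemma mag_dich p q : mag p -> mag q -> p ⊕ q = p \/ p ⊕ q = q.
Proof.
  intros hp hq. pose proof (mag_add p q hp hq) as h. unfold mag in *.
  destruct (A4 H p q) as [h1|h1]; rewrite h in h1; [left|right]; congruence.
Qed.

Lemma eopp x : e (opp x) = e x. Proof. apply (A3_inv H). Qed.
Lemma aopp x : x ⊕ opp x = e x. Proof. apply (A3_inv H). Qed.
Lemma opp_mag p : mag p -> opp p = p.
Proof.
  intro h. symmetry. apply (A3_uniq H).
  - rewrite mag_idem; auto.
  - reflexivity.
Qed.
Lemma oppK x : opp (opp x) = x.
Proof.
  symmetry. apply (A3_uniq H).
  - rewrite aC, aopp, eopp. reflexivity.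
  - rewrite eopp. reflexivity.
Qed.
Lemma opp_add x y : opp (x ⊕ y) = opp x ⊕ opp y.
Proof.
  symmetry. apply (A3_uniq H).
  - rewrite a4, !aopp, e_add. reflexivity.
  - rewrite !e_add, !eopp. reflexivity.
Qed.

Lemma ezero : e zero = zero.
Proof. pose proof (aE zero) as h. rewrite (E1 H) in h. exact h. Qed.
Lemma mag_zero : mag zero. Proof. apply ezero. Qed.
Lemma a0 x : x ⊕ zero = x. Proof. rewrite aC. apply (E1 H). Qed.
Lemma z0 x : zero ⊕ x = x. Proof. apply (E1 H). Qed.

Lemma zero_le_e x : zero ≼ e x.
Proof. pose proof (O3 H x zero) as h. apply h. apply z0. Qed.
Lemma zero_le_mag p : mag p -> zero ≼ p.
Proof. intro h. rewrite <- h. apply zero_le_e. Qed.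

Lemma mle_iff p q : mag p -> mag q -> (p ≼ q <-> p ⊕ q = q).
Proof.
  intros hp hq. split; intro h.
  - destruct (mag_dich p q hp hq) as [h1|h1]; auto.
    assert (q ≼ p). { rewrite <- hp. apply (O3 H p q). rewrite hp, aC. exact h1. }
    assert (p = q) by (apply lanti; auto). subst. apply mag_idem; auto.
  - rewrite <- hq. apply (O3 H q p). rewrite hq. exact h.
Qed.

Lemma mle_l p q : mag p -> mag q -> p ≼ p ⊕ q.
Proof. intros hp hq. apply mle_iff; auto. apply mag_add; auto. rewrite aA, mag_idem; auto. Qed.
Lemma mle_r p q : mag p -> mag q -> q ≼ p ⊕ q.
Proof. intros hp hq. rewrite aC. apply mle_l; auto. Qed.
Lemma mle_lub p q r : mag p -> mag q -> p ≼ r -> q ≼ r -> p ⊕ q ≼ r.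
Proof. intros hp hq h1 h2. destruct (mag_dich p q hp hq) as [h|h]; rewrite h; auto. Qed.
Lemma mnle_add N p q : mag p -> mag q -> ~ N ≼ p -> ~ N ≼ q -> ~ N ≼ p ⊕ q.
Proof. intros hp hq h1 h2. destruct (mag_dich p q hp hq) as [h|h]; rewrite h; auto. Qed.

Lemma absorb y B : mag B -> zero ≼ y -> y ≼ B -> y ⊕ B = B.
Proof.
  intros hB h1 h2. apply lanti.
  - rewrite <- (mag_idem B hB) at 2. apply O2r. exact h2.
  - rewrite <- (z0 B) at 1. apply O2r. exact h1.
Qed.

Lemma le_top x : e x ≼ e bigM.
Proof.
  apply mle_iff; try apply mag_e.
  pose proof (E3 H x) as h. rewrite <- (ee x) at 1. rewrite <- e_add, h. reflexivity.
Qed.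

Local Notation L := (lt le).

Lemma mulmag x y : mag (e x ⊗ y).
Proof. destruct (AM1 H x y) as [z hz]. rewrite hz. apply mag_e. Qed.
Lemma mag_mul_l p y : mag p -> mag (p ⊗ y).
Proof. intro hp. rewrite <- hp. apply mulmag. Qed.
Lemma mag_mul_r p y : mag p -> mag (y ⊗ p).
Proof. intro hp. rewrite mC. apply mag_mul_l; auto. Qed.
Lemma one_m x : one ⊗ x = x. Proof. apply (E2 H). Qed.
Lemma m1 x : x ⊗ one = x. Proof. rewrite mC. apply one_m. Qed.
Lemma eM2 x y : e (x ⊗ y) = e x ⊗ y ⊕ e y ⊗ x. Proof. apply (AM2 H). Qed.
Lemma le_emul x y : e x ⊗ y ≼ e (x ⊗ y).
Proof.
  apply mle_iff; [apply mulmag|apply mag_e|].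
  rewrite eM2, aA, mag_idem; auto. apply mulmag.
Qed.
Lemma oppm x y : opp (x ⊗ y) = opp x ⊗ y. Proof. apply (AM5 H). Qed.
Lemma m_opp x y : x ⊗ opp y = opp (x ⊗ y).
Proof. rewrite mC, <- oppm, mC. reflexivity. Qed.
Lemma magm_opp p y : mag p -> p ⊗ opp y = p ⊗ y.
Proof. intro hp. rewrite m_opp. apply opp_mag. apply mag_mul_l; auto. Qed.

Lemma neg_pos x : x ≼ e x -> x <> e x -> L (e (opp x)) (opp x).
Proof.
  intros h1 h2. rewrite eopp. split.
  - pose proof (O2r x (e x) (opp x) h1) as h. rewrite aopp in h.
    assert (h3 : opp x ⊕ e (opp x) = opp x) by apply aE.
    rewrite eopp, aC in h3. rewrite h3 in h. exact h.
  - intro h. apply h2. rewrite <- (oppK x) at 1. rewrite <- h. apply opp_mag, mag_e.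
Qed.

Lemma sign3 x : L (e x) x \/ x = e x \/ L x (e x).
Proof.
  destruct (classic (x = e x)) as [h|h]; auto.
  destruct (ltot (e x) x) as [h1|h1]; [left|right;right]; split; auto.
Qed.

Lemma mulmono x p q : mag p -> mag q -> p ≼ q -> x ⊗ p ≼ x ⊗ q.
Proof.
  intros hp hq h. destruct (sign3 x) as [hx|[hx|hx]].
  - apply (O4 H); auto.
  - rewrite hx. apply (O5 H). rewrite hp. apply lrefl. exact h.
  - pose proof (neg_pos x (proj1 hx) (proj2 hx)) as hn.
    pose proof (O4 H p q hn h) as h2.
    rewrite <- !oppm, !opp_mag in h2; auto; apply mag_mul_r; auto.
Qed.

Lemma mulmag_dist x p q : mag p -> mag q -> x ⊗ (p ⊕ q) = x ⊗ p ⊕ x ⊗ q.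
Proof.
  intros hp hq. destruct (mag_dich p q hp hq) as [h|h]; rewrite h.
  - assert (q ≼ p). { apply mle_iff; auto. rewrite aC; auto. }
    symmetry. rewrite aC. apply mle_iff; try apply mag_mul_r; auto. apply mulmono; auto.
  - assert (p ≼ q). { apply mle_iff; auto. }
    symmetry. apply mle_iff; try apply mag_mul_r; auto. apply mulmono; auto.
Qed.

Lemma G2 A z p : mag A -> mag p -> A ⊗ z ≼ A ⊗ (z ⊕ p).
Proof.
  intros hA hp. destruct (sign3 z) as [hz|[hz|hz]].
  - rewrite <- hA. apply (O5 H). apply hz.
    rewrite <- (a0 z) at 1. apply O2l. apply zero_le_mag; auto.
  - rewrite <- hA. apply (O5 H). rewrite <- hz. apply lrefl.
    rewrite <- (a0 z) at 1. apply O2l. apply zero_le_mag; auto.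
  - pose proof (neg_pos z (proj1 hz) (proj2 hz)) as hn.
    rewrite <- (magm_opp A z hA), <- (magm_opp A (z ⊕ p) hA).
    rewrite opp_add, (opp_mag p hp). rewrite <- hA. apply (O5 H). apply hn.
    rewrite <- (a0 (opp z)) at 1. apply O2l. apply zero_le_mag; auto.
Qed.

Lemma one_zl : one <> e one.
Proof.
  intro h1.
  assert (hall : forall x, mag x).
  { intro x. rewrite <- (one_m x), h1. apply mulmag. }
  destruct (E4 H) as [x0 [h0 _]].
  assert (hl : L zero (e x0)).
  { split. apply zero_le_e. intro h. apply h0. auto. }
  destruct (E6 H (eq_sym ezero) (eq_sym (ee x0)) hl) as [z [hz _]].
  apply hz. symmetry. apply hall.
Qed.

Lemma one_pos : e one ≼ one.
Proof.
  destruct (ltot (e one) one) as [h|h]; auto.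
  pose proof (neg_pos one h (not_eq_sym (not_eq_sym one_zl))) as hn.
  pose proof (O4 H one (e one) hn h) as h2.
  rewrite m1, <- oppm, one_m, (opp_mag (e one) (mag_e one)) in h2.
  exfalso. apply (proj2 hn). rewrite eopp. apply lanti; auto. pose proof (proj1 hn) as hh. rewrite eopp in hh. exact hh.
Qed.

Lemma le_Bmul x : e one ⊗ x ≼ e x.
Proof. rewrite <- (one_m x) at 2. apply le_emul. Qed.

Lemma e_one : e one = zero.
Proof.
  destruct (E5 H one) as [a [ha1 ha2]].
  set (B := e one) in *.
  assert (hB : mag B) by apply mag_e.
  assert (hnot : ~ a ≼ B).
  { intro h. apply one_zl. apply lanti. 2: apply one_pos.
    rewrite ha1 at 1. fold B. rewrite <- (mag_idem B hB) at 2. apply O2r. exact h. }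
  assert (hBa : B ≼ a). { destruct (ltot a B); auto. contradiction. }
  assert (h1 : one ≼ a ⊕ a). { rewrite ha1 at 1. fold B. apply O2l. exact hBa. }
  pose proof (O5 H one one (a ⊕ a) one_pos h1) as h2. fold B in h2.
  rewrite m1 in h2.
  pose proof (le_Bmul (a ⊕ a)) as h3. fold B in h3.
  rewrite e_add, ha2, (mag_idem zero mag_zero) in h3.
  apply lanti. eapply ltr; eauto. apply zero_le_mag; auto.
Qed.

Lemma zmul_le x : zero ⊗ x ≼ e x.
Proof. rewrite <- e_one. apply le_Bmul. Qed.
Lemma zmul_prec a : e a = zero -> zero ⊗ a = zero.
Proof.
  intro h. apply lanti. eapply ltr. apply zmul_le. rewrite h. apply lrefl.
  apply zero_le_mag. rewrite <- ezero. apply mulmag.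
Qed.
Lemma one_gt0 : L zero one.
Proof. rewrite <- e_one. split. apply one_pos. intro h. apply one_zl. auto. Qed.

Lemma wc w : w <> e w -> w ⊗ u w = w. Proof. intro h. apply (M2_neutral H h). Qed.
Lemma cc w : w <> e w -> u w ⊗ u w = u w.
Proof. intro h. apply (M2_min H). exact h. apply wc; auto. Qed.
Lemma c_zl w : w <> e w -> u w <> e (u w).
Proof.
  intros hw h. apply hw. assert (hm : mag (w ⊗ e (u w))) by (apply mag_mul_r, mag_e).
  rewrite <- h, wc in hm; auto.
Qed.
Lemma Ec w : w <> e w -> e (u w) ⊗ u w = e (u w).
Proof.
  intro hw. pose proof (eM2 (u w) (u w)) as h. rewrite cc in h; auto.
  rewrite mag_idem in h by apply mulmag. auto.
Qed.
Lemma c_pos w : w <> e w -> L (e (u w)) (u w).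
Proof.
  intro hw. destruct (sign3 (u w)) as [h|[h|h]]; auto.
  - exfalso. apply (c_zl w hw). exact h.
  - exfalso. pose proof (neg_pos (u w) (proj1 h) (proj2 h)) as hn.
    pose proof (O4 H (u w) (e (u w)) hn (proj1 h)) as h2.
    rewrite <- oppm, (cc w hw) in h2.
    rewrite <- oppm, mC, (Ec w hw) in h2.
    rewrite (opp_mag (e (u w)) (mag_e _)) in h2.
    apply (proj2 hn). rewrite eopp. apply lanti; auto. pose proof (proj1 hn) as hh. rewrite eopp in hh. exact hh.
Qed.
Lemma AM3' w : w <> e w -> e (u w) = e w ⊗ inv w. Proof. intro h. apply (AM3 H h). Qed.
Lemma Rzl w : w <> e w -> R w = e (u w).
Proof. intro h. unfold relunc. destruct (excluded_middle_informative (w = e w)); auto. contradiction. Qed.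
Lemma Rmag p : p = e p -> R p = bigM.
Proof. intro h. unfold relunc. destruct (excluded_middle_informative (p = e p)); auto. contradiction. Qed.
Lemma inv_zl w : w <> e w -> inv w <> e (inv w). Proof. intro h. apply (M3_inv H h). Qed.
Lemma winv w : w <> e w -> w ⊗ inv w = u w. Proof. intro h. apply (M3_inv H h). Qed.
Lemma uinv w : w <> e w -> u (inv w) = u w. Proof. intro h. apply (M3_inv H h). Qed.
Lemma invK w : w <> e w -> inv (inv w) = w.
Proof.
  intro h. symmetry. apply (M3_uniq H). apply inv_zl; auto. exact h.
  rewrite mC, winv, uinv; auto. rewrite uinv; auto.
Qed.
Lemma le_cw w : w <> e w -> e (u w) ⊗ w ≼ e w.
Proof.
  intro hw. pose proof (eM2 w (u w)) as h. rewrite wc in h; auto.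
  rewrite h. apply mle_r; apply mulmag.
Qed.
Lemma le_wc w : w <> e w -> e w ⊗ u w ≼ e w.
Proof.
  intro hw. pose proof (eM2 w (u w)) as h. rewrite wc in h; auto.
  rewrite h at 2. apply mle_l; apply mulmag.
Qed.

Lemma inv_pos k : L (e k) k -> L (e (inv k)) (inv k).
Proof.
  intro hk. assert (hkz : k <> e k) by (intro h; apply (proj2 hk); auto).
  set (v := inv k). destruct (sign3 v) as [h|[h|h]]; auto.
  - exfalso. apply (inv_zl k hkz). exact h.
  - exfalso. pose proof (O4 H v (e v) hk (proj1 h)) as h2.
    unfold v in h2. rewrite winv in h2; auto.
    assert (h3 : k ⊗ e (inv k) ≼ e (u k)).
    { rewrite (mC k (e (inv k))), <- (winv k hkz), (mC k (inv k)). apply le_emul. }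
    pose proof (c_pos k hkz) as hc. apply (proj2 hc). apply lanti. apply hc. eapply ltr; eauto.
Qed.

Lemma pos_of_nonneg_prec a : e a = zero -> zero ≼ a -> a <> zero -> L (e a) a.
Proof. intros h1 h2 h3. rewrite h1. split; auto. Qed.

Lemma opp_nonneg a : a ≼ e a -> e a ≼ opp a.
Proof.
  intro h. pose proof (O2r a (e a) (opp a) h) as h2. rewrite aopp in h2.
  assert (h3 : opp a ⊕ e (opp a) = opp a) by apply aE.
  rewrite eopp, aC in h3. rewrite h3 in h2. exact h2.
Qed.

Section TopSec.
Hypothesis hyp : forall k, e k = zero -> k <> zero -> one ≼ u k.

Lemma one_le_top : one ≼ e bigM.
Proof.
  set (m := e bigM).
  assert (hm0 : m <> zero).
  { intro h. destruct (E4 H) as [x0 [h0 _]]. apply h0. apply lanti.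
    rewrite <- h. apply le_top. apply zero_le_e. }
  assert (hl : L zero m) by (split; [apply zero_le_e| auto]).
  destruct (E6 H (eq_sym ezero) (eq_sym (ee bigM)) hl) as [z [hz [hz1 hz2]]].
  destruct (E5 H z) as [k [hk1 hk2]].
  assert (hkz : k ≼ z). { rewrite hk1. rewrite <- (a0 k) at 1. apply O2l. apply zero_le_e. }
  assert (hk0 : k <> zero). { intro h. apply hz. rewrite hk1, h, z0, ee. reflexivity. }
  assert (hkpos : zero ≼ k).
  { destruct (ltot zero k) as [h|h]; auto. exfalso.
    assert (h1 : z ≼ e z). { rewrite hk1 at 1. rewrite <- (z0 (e z)) at 2. apply O2r. exact h. }
    pose proof (opp_nonneg z h1) as h2.
    pose proof (O2r zero z (opp z) (proj1 hz1)) as h3. rewrite z0, aopp in h3.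
    apply hz. rewrite <- (oppK z) at 1. assert (opp z = e z) by (apply lanti; auto).
    rewrite H0. apply opp_mag, mag_e. }
  assert (hkL : L (e k) k) by (apply pos_of_nonneg_prec; auto).
  pose proof (inv_pos k hkL) as hv.
  pose proof (O4 H k m hv (ltr _ _ _ hkz (proj1 hz2))) as h2.
  rewrite mC, winv in h2 by (intro h; apply (proj2 hkL); auto).
  assert (h3 : inv k ⊗ m ≼ m).
  { unfold m. rewrite mC. destruct (AM1 H bigM (inv k)) as [w hw]. rewrite hw. apply le_top. }
  apply (ltr _ _ _ (hyp k hk2 hk0)). eapply ltr; eauto.
Qed.

Lemma absorb_top_nonneg a : e a = zero -> zero ≼ a -> a ⊕ e bigM = e bigM.
Proof.
  intros h1 h2. destruct (classic (a = zero)) as [h|h].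
  - rewrite h. apply z0.
  - apply absorb. apply mag_e. auto.
    pose proof (O4 H one (e bigM) (pos_of_nonneg_prec a h1 h2 h) one_le_top) as h3.
    rewrite m1 in h3. eapply ltr. apply h3.
    rewrite mC. destruct (AM1 H bigM a) as [w hw]. rewrite hw. apply le_top.
Qed.

Lemma absorb_top a : e a = zero -> a ⊕ e bigM = e bigM.
Proof.
  intro h1. destruct (ltot zero a) as [h|h].
  - apply absorb_top_nonneg; auto.
  - assert (h2 : zero ≼ opp a). { rewrite <- h1. apply opp_nonneg. rewrite h1. auto. }
    assert (h3 : e (opp a) = zero) by (rewrite eopp; auto).
    pose proof (absorb_top_nonneg (opp a) h3 h2) as h4.
    rewrite <- (oppK a), <- (opp_mag (e bigM) (mag_e _)) at 1.
    rewrite <- opp_add, h4. apply opp_mag, mag_e.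
Qed.

Lemma mag_M : mag bigM.
Proof.
  destruct (E5 H bigM) as [a [h1 h2]]. unfold mag.
  rewrite h1 at 2. rewrite absorb_top; auto.
Qed.

Lemma le_M p : mag p -> p ≼ bigM.
Proof. intro hp. rewrite <- hp, <- mag_M. apply le_top. Qed.
Lemma one_le_M : one ≼ bigM.
Proof. rewrite <- mag_M. apply one_le_top. Qed.
End TopSec.

Lemma O3m p y : mag p -> y ⊕ p = p -> y ≼ p /\ opp y ≼ p.
Proof. intros hp h. pose proof (O3 H p y) as h2. rewrite hp in h2. auto. Qed.

Lemma Rmag_any w : mag bigM -> mag (R w).
Proof.
  intro hM. unfold relunc. destruct (excluded_middle_informative (w = e w)); auto. apply mag_e.
Qed.
Lemma mrear a b c d : (a ⊗ b) ⊗ (c ⊗ d) = (c ⊗ a) ⊗ (d ⊗ b).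
Proof. rewrite m4, (mC a c), (mC b d). reflexivity. Qed.

Section DirB.
Hypothesis HB : forall x y z : T,
  x ⊗ y ⊕ x ⊗ z = x ⊗ (y ⊕ z) ⊕ e x ⊗ y ⊕ e x ⊗ z.

Lemma SD A y z : mag A -> A ⊗ (y ⊕ z) ≼ A ⊗ y ⊕ A ⊗ z.
Proof.
  intro hA. pose proof (HB A y z) as h. rewrite hA, <- aA in h.
  apply (proj2 (mle_iff _ _ (mag_mul_l _ _ hA) (mag_add _ _ (mag_mul_l _ _ hA) (mag_mul_l _ _ hA)))).
  symmetry; exact h.
Qed.

Lemma c_eq w : w <> e w -> u w = one ⊕ e (u w).
Proof.
  intro hw. pose proof (c_zl w hw) as hc. pose proof (c_pos w hw) as hcp.
  pose proof (cc w hw) as hcc. pose proof (Ec w hw) as hEc.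
  set (c := u w) in *. set (E := e c) in *.
  assert (hEm : mag E) by apply mag_e.
  set (sx := one ⊕ opp c).
  set (t := c ⊗ sx).
  assert (ht : t ⊕ E = E).
  { pose proof (HB c one (opp c)) as h. fold E in h.
    rewrite m1, m_opp, hcc, aopp in h. fold E in h.
    rewrite m1, (magm_opp E c hEm), hEc, <- aA, (mag_idem E hEm) in h.
    symmetry. exact h. }
  assert (hs : e sx = E). { unfold sx. rewrite e_add, e_one, eopp, z0. reflexivity. }
  assert (hsE : sx ⊕ c = one ⊕ E).
  { unfold sx. rewrite <- aA, (aC (opp c) c), aopp. reflexivity. }
  assert (htE : t ≼ E) by (apply (O3m E t hEm ht)).
  assert (htE2 : opp t ≼ E) by (apply (O3m E t hEm ht)).
  assert (hc1 : one ≼ c).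
  { destruct (ltot one c) as [h|h]; auto.
    pose proof (O2r c one (opp c) h) as h2. rewrite aopp in h2. fold sx E in h2.
    destruct (classic (sx = E)) as [h3|h3].
    - assert (one ⊕ E = c). { rewrite <- hsE, h3, aC. unfold E. apply aE. }
      rewrite <- H0. rewrite <- (a0 one) at 1. apply O2l. apply zero_le_mag; auto.
    - exfalso. assert (hsz : sx <> e sx) by (rewrite hs; auto).
      pose proof (O4 H E sx hcp h2) as h4. fold t in h4. rewrite mC, hEc in h4.
      assert (t = E) by (apply lanti; auto).
      apply (proj1 (M4 H hc hsz)). fold t. rewrite H0. symmetry. apply hEm. }
  assert (hs1 : sx ≼ E). { pose proof (O2r one c (opp c) hc1) as h. rewrite aopp in h. exact h. }
  assert (hs2 : opp sx ≼ E).
  { destruct (ltot (opp sx) E) as [h|h]; auto.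
    destruct (classic (opp sx = E)) as [h3|h3]. rewrite h3. apply lrefl.
    exfalso. assert (hsz : opp sx <> e (opp sx)) by (rewrite eopp, hs; auto).
    pose proof (O4 H E (opp sx) hcp h) as h4. rewrite mC, hEc, m_opp in h4. fold t in h4.
    assert (opp t = E) by (apply lanti; auto).
    apply (proj1 (M4 H hc hsz)). rewrite m_opp. fold t. rewrite H0. symmetry. apply hEm. }
  assert (hsE2 : sx ⊕ E = E).
  { apply lanti.
    - rewrite <- (mag_idem E hEm) at 2. apply O2r. exact hs1.
    - pose proof (O2r (opp sx) E sx hs2) as h. rewrite aC, aopp, hs in h. rewrite aC. exact h. }
  rewrite <- hsE. rewrite <- (aE c) at 2. fold E. rewrite (aC c E), aA, hsE2. rewrite aC. unfold E. rewrite aE. reflexivity.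
Qed.

Lemma c_ge1 w : w <> e w -> one ≼ u w.
Proof.
  intro hw. rewrite (c_eq w hw). rewrite <- (a0 one) at 1. apply O2l. apply zero_le_e.
Qed.

Lemma E_lt1 w : w <> e w -> ~ one ≼ e (u w).
Proof.
  intros hw h. apply (c_zl w hw). rewrite (c_eq w hw) at 1.
  apply absorb. apply mag_e. apply (proj1 one_gt0). exact h.
Qed.

Lemma K w p : w <> e w -> mag p -> p ⊗ u w = p.
Proof.
  intros hw hp. rewrite (c_eq w hw). set (E := e (u w)).
  assert (hE1 : E ≼ one). { destruct (ltot E one) as [h|h]; auto. exfalso. apply (E_lt1 w hw h). }
  apply lanti.
  - eapply ltr. apply SD; auto. rewrite m1. apply mle_lub; auto. apply mag_mul_l; auto. apply lrefl.
    pose proof (O5 H p E one) as h. rewrite hp, m1 in h. apply h; auto. unfold E. rewrite ee. apply lrefl.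
  - pose proof (O5 H p one (one ⊕ E) one_pos) as h. rewrite hp, m1 in h. apply h.
    rewrite <- (a0 one) at 1. apply O2l. apply zero_le_e.
Qed.

Lemma hypB k : e k = zero -> k <> zero -> one ≼ u k.
Proof. intros h1 h2. apply c_ge1. rewrite h1. auto. Qed.

Lemma magMB : mag bigM. Proof. apply (mag_M hypB). Qed.

Lemma Rlt_M y : y <> e y -> ~ bigM ≼ R y.
Proof.
  intros hy h. rewrite (Rzl y hy) in h. apply (E_lt1 y hy).
  eapply ltr. apply (one_le_M hypB). exact h.
Qed.

Lemma cancel_form a b p : b <> e b -> mag p -> (p ⊗ inv b) ⊗ (b ⊗ a) = p ⊗ a.
Proof.
  intros hb hp. rewrite <- mA, (mA (inv b) b a), (mC (inv b) b), winv, mA, K; auto.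
Qed.

Lemma Rlem1 x y : R x ≼ R y -> e x ⊗ y ≼ e y ⊗ x.
Proof.
  intro h. destruct (classic (y = e y)) as [hy|hy].
  - pose proof (le_emul x y) as h1. rewrite (mC x y) in h1.
    assert (hm : mag (y ⊗ x)). { rewrite hy. apply mulmag. }
    rewrite hm in h1. rewrite <- hy. exact h1.
  - assert (hx : x <> e x).
    { intro hx. rewrite (Rmag x hx) in h. apply (Rlt_M y hy h). }
    rewrite (Rzl x hx), (Rzl y hy), !AM3' in h; auto.
    pose proof (mulmono (x ⊗ y) _ _ (mulmag _ _) (mulmag _ _) h) as h2.
    rewrite mC, cancel_form in h2; auto; try apply mag_e.
    rewrite (mC x y), (mC (y ⊗ x)), cancel_form in h2; auto. apply mag_e.
Qed.

Lemma Rlem2 x y : x <> e x -> y <> e y -> e x ⊗ y ≼ e y ⊗ x -> R x ≼ R y.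
Proof.
  intros hx hy h. rewrite (Rzl x hx), (Rzl y hy), !AM3'; auto.
  pose proof (mulmono (inv x ⊗ inv y) _ _ (mulmag _ _) (mulmag _ _) h) as h2.
  rewrite mrear, winv, K in h2; auto; try apply mulmag.
  rewrite (mC (inv x) (inv y)), mrear, winv, K in h2; auto. apply mulmag.
Qed.

Lemma Az_bound A y z : mag A -> A ⊗ z ≼ A ⊗ (y ⊕ z) ⊕ A ⊗ y.
Proof.
  intro hA. pose proof (SD A (y ⊕ z) (opp y) hA) as h.
  assert (h1 : (y ⊕ z) ⊕ opp y = e y ⊕ z).
  { rewrite <- aA, (aC z (opp y)), aA, aopp. reflexivity. }
  rewrite h1, magm_opp in h; auto.
  eapply ltr. 2: exact h. rewrite (aC (e y) z). apply G2; auto. apply mag_e.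
Qed.

Lemma dirB x y z :
  x ⊗ y ⊕ x ⊗ z = x ⊗ (y ⊕ z) <->
  (e x ⊗ (y ⊕ z) = e x ⊗ y ⊕ e x ⊗ z \/ R x ≼ R y ⊕ R z).
Proof.
  pose proof magMB as hM.
  set (A := e x). set (N := A ⊗ y ⊕ A ⊗ z). set (Q := x ⊗ (y ⊕ z)).
  assert (hA : mag A) by apply mag_e.
  assert (hN : mag N) by (apply mag_add; apply mag_mul_l; auto).
  assert (hP : x ⊗ y ⊕ x ⊗ z = Q ⊕ N). { rewrite HB. unfold Q, N, A. rewrite <- aA. reflexivity. }
  assert (heQ : e Q = A ⊗ (y ⊕ z) ⊕ (e y ⊗ x ⊕ e z ⊗ x)).
  { unfold Q, A. rewrite eM2, e_add. f_equal. rewrite mC, mulmag_dist, (mC x (e y)), (mC x (e z)); auto; apply mag_e. }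
  assert (hQN : Q ⊕ N = Q <-> N ≼ e Q).
  { rewrite absorb_iff, (mle_iff N (e Q) hN (mag_e Q)), aC. tauto. }
  assert (hmyz : mag (A ⊗ (y ⊕ z))) by (apply mag_mul_l; auto).
  assert (hmy : mag (e y ⊗ x)) by apply mulmag.
  assert (hmz : mag (e z ⊗ x)) by apply mulmag.
  assert (hAyz : A ⊗ (y ⊕ z) ≼ N) by (apply SD; auto).
  assert (half : forall y z, R x ≼ R y ->
     A ⊗ y ⊕ A ⊗ z ≼ A ⊗ (y ⊕ z) ⊕ (e y ⊗ x ⊕ e z ⊗ x)).
  { intros y' z' h.
    assert (hm1 : mag (A ⊗ (y' ⊕ z'))) by (apply mag_mul_l; auto).
    assert (hm2 : mag (e y' ⊗ x)) by apply mulmag.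
    assert (hm3 : mag (e z' ⊗ x)) by apply mulmag.
    assert (hm23 : mag (e y' ⊗ x ⊕ e z' ⊗ x)) by (apply mag_add; auto).
    assert (h0 : e y' ⊗ x ≼ A ⊗ (y' ⊕ z') ⊕ (e y' ⊗ x ⊕ e z' ⊗ x)).
    { eapply ltr. apply (mle_l _ _ hm2 hm3). apply mle_r; auto. }
    assert (h1 : A ⊗ y' ≼ A ⊗ (y' ⊕ z') ⊕ (e y' ⊗ x ⊕ e z' ⊗ x)).
    { eapply ltr. apply Rlem1. exact h. exact h0. }
    assert (h2 : A ⊗ (y' ⊕ z') ≼ A ⊗ (y' ⊕ z') ⊕ (e y' ⊗ x ⊕ e z' ⊗ x)) by (apply mle_l; auto).
    apply mle_lub; try apply mag_mul_l; auto.
    eapply ltr. apply (Az_bound A y' z' hA). apply mle_lub; auto. apply mag_mul_l; auto. }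
  rewrite hP, hQN. split.
  - intro hq. destruct (classic (R x ≼ R y ⊕ R z)) as [hc|hc]; [right; exact hc| left].
    destruct (classic (x = e x)) as [hx|hx].
    + fold A. apply lanti; auto. fold N.
      assert (hQ : Q = A ⊗ (y ⊕ z)) by (unfold Q, A; rewrite <- hx; reflexivity).
      rewrite hQ, hmyz in hq. exact hq.
    + fold A. fold N. apply lanti; auto.
      destruct (classic (N ≼ A ⊗ (y ⊕ z))) as [hh|hh]; auto. exfalso.
      assert (hRy : ~ R x ≼ R y).
      { intro h; apply hc; eapply ltr; [exact h| apply mle_l; apply Rmag_any; auto]. }
      assert (hRz : ~ R x ≼ R z).
      { intro h; apply hc; eapply ltr; [exact h| apply mle_r; apply Rmag_any; auto]. }
      assert (hyz : y <> e y).
      { intro hy; apply hRy; rewrite (Rmag y hy); apply le_M; [apply hypB | apply Rmag_any; auto]. }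
      assert (hzz : z <> e z).
      { intro hz; apply hRz; rewrite (Rmag z hz); apply le_M; [apply hypB | apply Rmag_any; auto]. }
      assert (hny : ~ N ≼ e y ⊗ x).
      { intro h; apply hRy; apply (Rlem2 x y hx hyz). apply (ltr _ N); [unfold N; apply mle_l; apply mag_mul_l; auto | exact h]. }
      assert (hnz : ~ N ≼ e z ⊗ x).
      { intro h; apply hRz; apply (Rlem2 x z hx hzz). apply (ltr _ N); [unfold N; apply mle_r; apply mag_mul_l; auto | exact h]. }
      rewrite heQ in hq.
      apply (mnle_add N _ _ hmyz (mag_add _ _ hmy hmz) hh (mnle_add N _ _ hmy hmz hny hnz)). exact hq.
  - intros [h1|h2].
    + fold A in h1. fold N in h1. rewrite heQ, <- h1. apply mle_l; auto. apply mag_add; auto.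
    + destruct (mag_dich (R y) (R z) (Rmag_any y hM) (Rmag_any z hM)) as [e1|e1]; rewrite e1 in h2.
      * rewrite heQ. apply half; auto.
      * pose proof (half z y h2) as h3. rewrite heQ. unfold N.
        rewrite (aC (A ⊗ y)), (aC y z), (aC (e y ⊗ x)). exact h3.
Qed.

End DirB.

Section DirA.
Hypothesis HA : forall x y z : T,
  x ⊗ y ⊕ x ⊗ z = x ⊗ (y ⊕ z) <->
  (e x ⊗ (y ⊕ z) = e x ⊗ y ⊕ e x ⊗ z \/ R x ≼ R y ⊕ R z).

Lemma D0 w B : w <> e w -> mag B -> zero ⊗ w ⊕ zero ⊗ B = zero ⊗ (w ⊕ B).
Proof.
  intros hw hB. apply HA. right. rewrite (Rmag zero (eq_sym ezero)), (Rmag B (eq_sym hB)), (Rzl w hw).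
  rewrite (E3 H (u w)). apply lrefl.
Qed.

Lemma zprec_B b B : e b = zero -> mag B -> zero ⊗ (b ⊕ B) = zero ⊗ B.
Proof.
  intros hb hB. destruct (classic (b = zero)) as [h|h].
  - rewrite h, z0. reflexivity.
  - rewrite <- D0; auto. rewrite zmul_prec; auto. apply z0. rewrite hb. auto.
Qed.

Lemma Zdist y z : zero ⊗ (y ⊕ z) = zero ⊗ y ⊕ zero ⊗ z.
Proof.
  destruct (E5 H y) as [b [hy hb]]. destruct (E5 H z) as [c [hz hc]].
  remember (e y) as B eqn:hB. remember (e z) as C eqn:hC.
  assert (mB : mag B) by (rewrite hB; apply mag_e).
  assert (mC' : mag C) by (rewrite hC; apply mag_e).
  assert (hbc : e (b ⊕ c) = zero) by (rewrite e_add, hb, hc; apply z0).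
  rewrite hy, hz, a4, (zprec_B (b ⊕ c) (B ⊕ C) hbc (mag_add _ _ mB mC')), (zprec_B b B hb mB), (zprec_B c C hc mC').
  apply mulmag_dist; auto.
Qed.

Lemma PD p y z : e p = zero -> p ⊗ y ⊕ p ⊗ z = p ⊗ (y ⊕ z).
Proof. intro hp. apply HA. left. rewrite hp. apply Zdist. Qed.

Lemma unit_lemma k c : e k = zero -> k <> zero -> k ⊗ c = k -> c ⊕ opp one = e c.
Proof.
  intros hk1 hk2 hkc. assert (hk : k <> e k) by (rewrite hk1; auto).
  pose proof (PD k c (opp one) hk1) as h. rewrite hkc, m_opp, m1, aopp, hk1 in h.
  destruct (classic (c ⊕ opp one = e (c ⊕ opp one))) as [h2|h2].
  - rewrite h2, e_add, eopp, e_one, a0. reflexivity.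
  - exfalso. apply (proj1 (M4 H hk h2)). rewrite <- h. symmetry. apply ezero.
Qed.

Lemma hypA k : e k = zero -> k <> zero -> one ≼ u k.
Proof.
  intros hk1 hk2. assert (hk : k <> e k) by (rewrite hk1; auto).
  pose proof (unit_lemma k (u k) hk1 hk2 (wc k hk)) as h.
  assert (h2 : u k = e (u k) ⊕ one).
  { rewrite <- h, <- aA. rewrite (aC (opp one) one), aopp, e_one, a0. reflexivity. }
  rewrite h2. rewrite <- (z0 one) at 1. apply O2r. apply zero_le_e.
Qed.

Lemma magMA : mag bigM. Proof. apply (mag_M hypA). Qed.

Lemma D1 t w B : mag B -> t ⊗ w ⊕ t ⊗ B = t ⊗ (w ⊕ B).
Proof.
  intro hB. pose proof magMA as hM. apply HA. right. rewrite (Rmag B (eq_sym hB)).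
  pose proof (E3 H (R w)) as h. rewrite (Rmag_any w hM) in h. rewrite h.
  apply le_M. apply hypA. apply Rmag_any; auto.
Qed.

Definition two := one ⊕ one.

Lemma e_two : e two = zero. Proof. unfold two. rewrite e_add, e_one. apply z0. Qed.
Lemma one_le_two : one ≼ two.
Proof. unfold two. rewrite <- (a0 one) at 1. apply O2l. apply (proj1 one_gt0). Qed.
Lemma two_zl : two <> e two.
Proof.
  rewrite e_two. intro h. apply (proj2 one_gt0). apply lanti. apply (proj1 one_gt0).
  rewrite <- h. apply one_le_two.
Qed.

Lemma prec_of_two p : p ⊗ two = zero -> mag p -> p = zero.
Proof.
  intros h hp. pose proof (O5 H p one two one_pos one_le_two) as h2. rewrite hp, m1, h in h2.
  apply lanti; auto. apply zero_le_mag; auto.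
Qed.

Lemma u_two : u two = one.
Proof.
  pose proof two_zl as hz. set (c := u two).
  assert (hec : e c = zero).
  { apply prec_of_two; try apply mag_e. apply lanti. rewrite <- e_two. apply le_cw; auto.
    apply zero_le_mag. apply mulmag. }
  assert (hc0 : c <> zero). { intro h. apply (c_zl two hz). fold c. rewrite hec. auto. }
  pose proof (unit_lemma c c hec hc0 (cc two hz)) as h. rewrite hec in h.
  transitivity ((c ⊕ opp one) ⊕ one).
  - rewrite <- aA, (aC (opp one) one), aopp, e_one, a0. reflexivity.
  - rewrite h. apply z0.
Qed.

Lemma Two D : mag D -> D ⊗ two ≼ D.
Proof.
  intro hD. pose proof two_zl as htz.
  set (h := inv two).
  assert (h2h : two ⊗ h = one) by (unfold h; rewrite winv, u_two; auto).
  assert (heh : e h = zero).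
  { apply prec_of_two; try apply mag_e. apply lanti. 2: apply zero_le_mag, mulmag.
    pose proof (eM2 two h) as h3. rewrite h2h, e_one, e_two in h3.
    rewrite h3. apply mle_r; [apply mag_mul_l, mag_zero | apply mulmag]. }
  set (D2 := D ⊗ two).
  assert (hD2 : mag D2) by (apply mag_mul_l; auto).
  destruct (ltot D2 D) as [hl|hl]; auto.
  destruct (classic (D = D2)) as [he|hne]. rewrite <- he; apply lrefl.
  exfalso.
  destruct (E6 H (eq_sym hD) (eq_sym hD2) (conj hl hne)) as [z [hz [hz1 hz2]]].
  assert (hz0 : zero ≼ z) by (apply (ltr _ D); [apply zero_le_mag; auto| apply hz1]).
  assert (hzD2 : z ⊕ D2 = D2) by (apply absorb; auto; apply hz2).
  destruct (E5 H z) as [k [hk1 hk2]].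
  assert (hez : e z ⊕ D2 = D2).
  { pose proof (f_equal e hzD2) as h3. rewrite e_add, hD2 in h3. exact h3. }
  assert (hkD2 : k ⊕ D2 = D2).
  { rewrite <- hez at 1. rewrite aA, <- hk1. exact hzD2. }
  assert (hkD : k ⊕ D <> D).
  { intro hkd. destruct (ltot (e z) D) as [h1|h1].
    - apply (proj2 hz1). apply lanti. apply hz1.
      assert (h3 : z ⊕ D = D).
      { rewrite hk1, <- aA. rewrite (proj1 (mle_iff _ _ (mag_e z) hD) h1). exact hkd. }
      rewrite <- h3. rewrite <- (a0 z) at 1. apply O2l. apply zero_le_mag; auto.
    - apply hz. assert (h3 : D ⊕ e z = e z) by (apply mle_iff; auto; apply mag_e).
      rewrite hk1 at 1. rewrite <- h3, aA, hkd, h3. reflexivity. }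
  assert (hhD : h ⊗ D2 = D).
  { unfold D2. rewrite (mC D two), mA, (mC h two), h2h. apply one_m. }
  assert (hhk : h ⊗ k ⊕ D = D).
  { rewrite <- hhD at 1. rewrite (PD h k D2 heh), hkD2. exact hhD. }
  assert (ehk : e (h ⊗ k) = zero).
  { rewrite eM2, heh, hk2, zmul_prec, zmul_prec; auto. apply z0. }
  assert (hk2' : h ⊗ k ⊕ h ⊗ k = k).
  { pose proof (PD (h ⊗ k) one one ehk) as h3. rewrite m1 in h3. rewrite h3.
    fold two. rewrite (mC h k), <- mA, (mC h two), h2h. apply m1. }
  apply hkD. rewrite <- hk2' at 1. rewrite <- aA, hhk. exact hhk.
Qed.

Lemma absP b : e b = zero -> exists ab, (ab = b \/ ab = opp b) /\ zero ≼ ab /\ b ≼ ab /\ opp b ≼ ab.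
Proof.
  intro hb. destruct (ltot zero b) as [h|h].
  - exists b. repeat split; auto. apply lrefl.
    eapply ltr. 2: exact h. pose proof (O2r zero b (opp b) h) as h2. rewrite z0, aopp, hb in h2. exact h2.
  - assert (h2 : zero ≼ opp b). { rewrite <- hb. apply opp_nonneg. rewrite hb. auto. }
    exists (opp b). repeat split; auto. eapply ltr; eauto. apply lrefl.
Qed.

Lemma Sprec A b c : mag A -> e b = zero -> e c = zero -> A ⊗ (b ⊕ c) ≼ A ⊗ b ⊕ A ⊗ c.
Proof.
  intros hA hb hc.
  assert (hmb : mag (A ⊗ b)) by (apply mag_mul_l; auto).
  assert (hmc : mag (A ⊗ c)) by (apply mag_mul_l; auto).
  destruct (absP b hb) as [ab [hab1 [hab2 [hab3 hab4]]]].
  destruct (absP c hc) as [ac [hac1 [hac2 [hac3 hac4]]]].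
  assert (hAm : exists m, e m = zero /\ zero ≼ m /\ b ≼ m /\ opp b ≼ m /\ c ≼ m /\ opp c ≼ m /\
                  A ⊗ m ≼ A ⊗ b ⊕ A ⊗ c).
  { destruct (ltot ab ac) as [h|h].
    - exists ac. split; [|split; [|split; [|split; [|split; [|split]]]]].
      + destruct hac1 as [-> | ->]; rewrite ?eopp; auto.
      + exact hac2.
      + apply (ltr _ ab); auto.
      + apply (ltr _ ab); auto.
      + exact hac3.
      + exact hac4.
      + destruct hac1 as [-> | ->]; rewrite ?magm_opp; auto; apply mle_r; auto.
    - exists ab. split; [|split; [|split; [|split; [|split; [|split]]]]].
      + destruct hab1 as [-> | ->]; rewrite ?eopp; auto.
      + exact hab2.
      + exact hab3.
      + exact hab4.
      + apply (ltr _ ac); auto.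
      + apply (ltr _ ac); auto.
      + destruct hab1 as [-> | ->]; rewrite ?magm_opp; auto; apply mle_l; auto. }
  destruct hAm as [m [hm1 [hm2 [hm3 [hm4 [hm5 [hm6 hm7]]]]]]].
  assert (hs : e (b ⊕ c) = zero) by (rewrite e_add, hb, hc; apply z0).
  destruct (absP (b ⊕ c) hs) as [as' [has1 [has2 [has3 has4]]]].
  assert (hle : as' ≼ m ⊕ m).
  { assert (h1 : b ⊕ c ≼ m ⊕ m) by (eapply ltr; [apply O2r; exact hm3| apply O2l; exact hm5]).
    assert (h2 : opp (b ⊕ c) ≼ m ⊕ m)
      by (rewrite opp_add; eapply ltr; [apply O2r; exact hm4| apply O2l; exact hm6]).
    destruct has1 as [-> | ->]; auto. }
  assert (hAs : A ⊗ (b ⊕ c) = A ⊗ as') by (destruct has1 as [-> | ->]; rewrite ?magm_opp; auto).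
  rewrite hAs.
  assert (heas : e as' = zero) by (destruct has1 as [-> | ->]; rewrite ?eopp; auto).
  pose proof (O5 H A as' (m ⊕ m)) as h3. rewrite hA, heas in h3.
  eapply ltr. apply h3; auto.
  pose proof (PD m one one hm1) as h4. rewrite m1 in h4. rewrite h4. fold two.
  rewrite mA. eapply ltr. apply Two. apply mag_mul_l; auto. exact hm7.
Qed.

Lemma S A y z : mag A -> A ⊗ (y ⊕ z) ≼ A ⊗ y ⊕ A ⊗ z.
Proof.
  intro hA. destruct (E5 H y) as [b [hy hb]]. destruct (E5 H z) as [c [hz hc]].
  remember (e y) as B eqn:hB. remember (e z) as C eqn:hC.
  assert (mB : mag B) by (rewrite hB; apply mag_e).
  assert (mC' : mag C) by (rewrite hC; apply mag_e).
  assert (hAy : A ⊗ y = A ⊗ b ⊕ A ⊗ B) by (rewrite hy; symmetry; apply D1; auto).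
  assert (hAz : A ⊗ z = A ⊗ c ⊕ A ⊗ C) by (rewrite hz; symmetry; apply D1; auto).
  assert (hAyz : A ⊗ (y ⊕ z) = A ⊗ (b ⊕ c) ⊕ (A ⊗ B ⊕ A ⊗ C)).
  { rewrite hy, hz, a4, <- (mulmag_dist A B C mB mC'). symmetry. apply D1. apply mag_add; auto. }
  rewrite hAy, hAz, hAyz, (a4 (A ⊗ b)).
  assert (m1' : mag (A ⊗ (b ⊕ c))) by (apply mag_mul_l; auto).
  assert (m2 : mag (A ⊗ b ⊕ A ⊗ c)) by (apply mag_add; apply mag_mul_l; auto).
  assert (m3 : mag (A ⊗ B ⊕ A ⊗ C)) by (apply mag_add; apply mag_mul_l; auto).
  apply mle_lub; auto.
  - eapply ltr. apply Sprec; auto. apply mle_l; auto.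
  - apply mle_r; auto.
Qed.

Lemma dirA x y z : x ⊗ y ⊕ x ⊗ z = x ⊗ (y ⊕ z) ⊕ e x ⊗ y ⊕ e x ⊗ z.
Proof.
  destruct (E5 H x) as [a [hx ha]].
  remember (e x) as A eqn:hAx.
  assert (hA : mag A) by (rewrite hAx; apply mag_e).
  assert (h1 : forall w, x ⊗ w = a ⊗ w ⊕ A ⊗ w).
  { intro w. rewrite hx, mC, <- D1, (mC w a), (mC w A); auto. }
  rewrite !h1. rewrite <- (PD a y z ha).
  rewrite a4, <- !aA. f_equal.
  assert (hS := S A y z hA).
  apply mle_iff in hS; try apply mag_mul_l; auto. 2: apply mag_add; apply mag_mul_l; auto.
  rewrite aA. symmetry. rewrite hS, aA. reflexivity.
Qed.

End DirA.

End Solid.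

Theorem mainTheorem2 (T : Type) (add mul : T -> T -> T) (le : T -> T -> Prop)
  (e opp u inv : T -> T) (zero one bigM : T) :
  solid_without_AM4 add mul le e opp u inv zero one bigM ->
  ((forall x y z : T,
      add (mul x y) (mul x z) = mul x (add y z) <->
      (mul (e x) (add y z) = add (mul (e x) y) (mul (e x) z) \/
       le (relunc e u bigM x)
          (add (relunc e u bigM y) (relunc e u bigM z))))
   <->
   (forall x y z : T,
      add (mul x y) (mul x z) =
      add (add (mul x (add y z)) (mul (e x) y)) (mul (e x) z))).
Proof.
  intro HS. split.
  - intros HA x y z. eapply dirA; eassumption.
  - intros HB x y z. eapply dirB; eassumption.
Qed.
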